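(* There exists $n_0$ such that the following holds for every $n\geq n_0$. Let $G$ be a graph of order $n$ whose adjacency matrix has largest eigenvalue $\mu(G)$ satisfying $\mu(G)>\sqrt{\lfloor n^{2}/4\rfloor}$. Then $G$ contains a cycle of length $t$ for every integer $t$ with $3\leq t\leq n/320$.
   Context: Graphs are finite and simple. $\mu(G)$ denotes the largest eigenvalue of the adjacency matrix of $G$. *)

(* Defs.v *)
From HB Require Import structures.
From mathcomp Require Import all_boot all_order all_algebra.
From mathcomp Require Import reals.
Set Implicit Arguments. Unset Strict Implicit. Unset Printing Implicit Defensive.
Import Order.TTheory GRing.Theory Num.Theory.
Local Open Scope ring_scope.

Definition simple_graph (T : finType) (e : rel T) : Prop :=
  symmetric e /\ irreflexive e.

Definition adjmx (R : realType) (T : finType) (e : rel T) : 'M[R]_#|T| :=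
  \matrix_(i, j) (e (enum_val i) (enum_val j))%:R.

Definition largest_eigenvalue (R : realType) (m : nat) (A : 'M[R]_m) (mu : R) : Prop :=
  eigenvalue A mu /\ (forall l : R, eigenvalue A l -> l <= mu).

Definition has_cycle (T : finType) (e : rel T) (t : nat) : Prop :=
  exists s : seq T, size s = t /\ uniq s /\ cycle e s.

(* Main.v *)
Require Import Defs.
From HB Require Import structures.
From mathcomp Require Import all_boot all_order all_algebra.
From mathcomp Require Import reals.
From mathcomp Require Import zify ring lra.
From Stdlib Require Import Classical.
Set Implicit Arguments. Unset Strict Implicit. Unset Printing Implicit Defensive.

Definition nb (V : finType) (e : rel V) (v : V) : {set V} := [set w | e v w].

Lemma card_nbI_sum (V : finType) (e : rel V) (w : V) (A : {set V}) :
  #|nb e w :&: A| = \sum_(v in A) (e w v : nat).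
Proof.
rewrite -sum1_card big_mkcond /= [RHS]big_mkcond /=.
apply: eq_bigr => v _; rewrite !inE.
by case: (v \in A); case: (e w v).
Qed.

Lemma size_in_set (V : finType) (A : {set V}) (s : seq V) :
  uniq s -> {subset s <= A} -> size s <= #|A|.
Proof.
move=> us sA; rewrite -(card_uniqP us); apply: subset_leq_card.
by apply/subsetP => y ys; apply: sA.
Qed.

Lemma max_path (V : finType) (e : rel V) (A : {set V}) (m : nat) (s : seq V) (x : V) :
  symmetric e -> irreflexive e -> sorted e (x :: s) -> uniq (x :: s) -> {subset x :: s <= A} ->
  #|A| - size s <= m ->
  exists y, exists s', [/\ sorted e (y :: s'), uniq (y :: s'), {subset y :: s' <= A} &
     (forall w, w \in A -> e y w -> w \in s')].
Proof.
move=> esym eirr; elim: m s x => [|m IH] s x hs hu hA hm.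
  exists x, s; split => // w wA exw.
  case: (boolP (w \in s)) => // ws.
  have hu' : uniq (w :: x :: s).
    rewrite /= inE negb_or ws andbT; rewrite /= in hu; rewrite hu andbT; apply/eqP=> wx; subst w.
    by rewrite eirr in exw.
  have : size (w :: x :: s) <= #|A|.
    by apply: size_in_set => // y; rewrite !inE => /orP[/eqP->//|]; apply: hA.
  rewrite /=; lia.
case: (pickP [pred w | (w \in A) && e x w && (w \notin x :: s)]) => [w /= /andP[/andP[wA exw] ws]|nop].
  apply: (IH (x :: s) w) => //.
  - by rewrite /= esym exw.
  - by rewrite /= ws.
  - by move=> y; rewrite inE => /orP[/eqP->//|]; apply: hA.
  - have : size (w :: x :: s) <= #|A|.
      apply: size_in_set; first by rewrite /= ws.
      by move=> y; rewrite inE => /orP[/eqP->//|]; apply: hA.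
    rewrite /=; lia.
exists x, s; split => // w wA exw.
have := nop w; rewrite /= wA exw /= inE negb_or => /negbT; rewrite negb_and !negbK.
case/orP => [/eqP wx|//].
by subst w; rewrite eirr in exw.
Qed.

Lemma low_deg (V : finType) (e : rel V) (A : {set V}) (k : nat) (x0 : V) :
  symmetric e -> irreflexive e ->
  (forall s, sorted e s -> uniq s -> {subset s <= A} -> size s < k) ->
  x0 \in A -> exists2 y, y \in A & #|nb e y :&: A| <= k - 2.
Proof.
move=> esym eirr hp x0A.
have [||||y [s' [hs hu hA hmax]]] := @max_path V e A #|A| [::] x0 esym eirr => //.
- by move=> z; rewrite inE => /eqP->.
- by rewrite subn0.
exists y; first by apply: hA; rewrite inE eqxx.
have hk := hp _ hs hu hA.
have : #|nb e y :&: A| <= #|s'|.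
  apply: subset_leq_card; apply/subsetP => w; rewrite !inE => /andP[ew wA].
  exact: hmax.
have := card_size s'; rewrite /= in hk; lia.
Qed.

Definition dsum (V : finType) (e : rel V) (A : {set V}) : nat :=
  \sum_(w in A) \sum_(v in A) (e w v : nat).

Lemma dsum_D1 (V : finType) (e : rel V) (A : {set V}) (y : V) :
  symmetric e -> irreflexive e -> y \in A ->
  dsum e A = dsum e (A :\ y) + 2 * \sum_(v in A :\ y) (e y v : nat).
Proof.
move=> esym eirr yA; rewrite /dsum (big_setD1 _ yA).
have -> : \sum_(v in A) (e y v : nat) = e y y + \sum_(v in A :\ y) (e y v : nat).
  by rewrite (big_setD1 y yA).
rewrite eirr add0n.
have -> : \sum_(w in A :\ y) \sum_(v in A) (e w v:nat) =
   \sum_(w in A :\ y) (e w y:nat) + \sum_(w in A:\ y) \sum_(v in A :\ y) (e w v:nat).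
  by rewrite -big_split; apply: eq_bigr => w _; rewrite (big_setD1 y yA).
have -> : \sum_(w in A :\ y) (e w y : nat) = \sum_(v in A :\ y) (e y v : nat).
  by apply: eq_bigr => w _; rewrite esym.
rewrite /=; lia.
Qed.

Lemma dsum_bound (V : finType) (e : rel V) (k : nat) (n : nat) (A : {set V}) :
  symmetric e -> irreflexive e -> #|A| <= n ->
  (forall s, sorted e s -> uniq s -> {subset s <= A} -> size s < k) ->
  dsum e A <= 2 * (k - 2) * #|A|.
Proof.
move=> esym eirr; elim: n A => [|n IH] A hn hp.
  have -> : A = set0 by apply/eqP; rewrite -cards_eq0; lia.
  by rewrite /dsum big_set0.
case: (set_0Vmem A) => [->|[x0 x0A]]; first by rewrite /dsum big_set0.
have [y yA hy] := low_deg esym eirr hp x0A.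
rewrite (dsum_D1 esym eirr yA).
have h1 : dsum e (A :\ y) <= 2 * (k - 2) * #|A :\ y|.
  apply: IH; first by move: hn; rewrite (cardsD1 y A) yA; lia.
  move=> s hs hu hA; apply: hp => // z /hA; rewrite inE => /andP[_ //].
have h2 : \sum_(v in A :\ y) (e y v : nat) <= k - 2.
  rewrite -card_nbI_sum; apply: leq_trans hy; apply: subset_leq_card.
  by apply/subsetP => z; rewrite !inE => /andP[-> /andP[_ ->]].
move: h1 h2; rewrite (cardsD1 y A) yA; lia.
Qed.

Lemma cardU_le (V : finType) (A B : {set V}) : #|A :|: B| <= #|A| + #|B|.
Proof. rewrite cardsU; lia. Qed.

Lemma cardD_ge (V : finType) (A B : {set V}) : #|A| - #|B| <= #|A :\: B|.
Proof.
rewrite cardsD; have : #|A :&: B| <= #|B| by apply: subset_leq_card; apply: subsetIr.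
lia.
Qed.

Definition good (V : finType) (e : rel V) (S : {set V}) (g : nat) (z : V) : bool :=
  (z \notin S) && (#|S :\: nb e z| <= g).

Lemma common_nb (V : finType) (e : rel V) (S Av : {set V}) (g : nat) (z z1 : V) :
  good e S g z -> good e S g z1 -> #|Av| + 2 * g < #|S| ->
  exists s, [/\ s \in S, s \notin Av, e z s & e z1 s].
Proof.
move=> /andP[_ gz] /andP[_ gz1] hc.
set C := S :\: ((S :\: nb e z) :|: (S :\: nb e z1) :|: Av).
have : 0 < #|C|.
  have := cardD_ge S ((S :\: nb e z) :|: (S :\: nb e z1) :|: Av).
  have := cardU_le (S :\: nb e z :|: S :\: nb e z1) Av.
  have := cardU_le (S :\: nb e z) (S :\: nb e z1).
  rewrite -/C; lia.
case/card_gt0P => s; rewrite !inE; case sS: (s \in S); last by rewrite !andbF.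
rewrite !andbT !negb_or !negbK => /andP[/andP[h1 h2] h3].
by exists s.
Qed.

Lemma chain (V : finType) (e : rel V) (S : {set V}) (g : nat) (zs : seq V) :
  symmetric e -> forall (z : V) (Av : {set V}),
  all (good e S g) (z :: zs) -> uniq (z :: zs) -> #|Av| + size zs + 2 * g < #|S| ->
  exists q, [/\ sorted e (z :: q), uniq (z :: q), last z q = last z zs, size q = (2 * size zs)%N &
     forall w, w \in q -> (w \in zs) || ((w \in S) && (w \notin Av))].
Proof.
move=> esym; elim: zs => [|z1 rest IH] z Av hg hu hc.
  by exists [::]; split.
have /and3P[gz gz1 grest] : [&& good e S g z, good e S g z1 & all (good e S g) rest] := hg.
have [s [sS sAv ezs ez1s]] := @common_nb V e S Av g z z1 gz gz1 ltac:(rewrite /= in hc; lia).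
have [|||q1 [hs1 hu1 hl1 hsz1 hm1]] := IH z1 (s |: Av).
- by rewrite /= gz1 grest.
- by move: hu; rewrite /= => /andP[_ ->].
- have := cardsU1 s Av; rewrite /= in hc; lia.
exists [:: s, z1 & q1]; split.
- by rewrite /= ezs esym ez1s /=; move: hs1; rewrite /=.
- have zS : z \notin S by case/andP: gz.
  have z1S : z1 \notin S by case/andP: gz1.
  move: hu; rewrite /= !inE => /andP[/norP[zz1 zrest] /andP[z1rest urest]].
  move: hu1 => /= /andP[z1q1 uq1].
  rewrite z1q1 uq1 !andbT; apply/andP; split.
    rewrite !negb_or; apply/and3P; split => //; first by apply/eqP=> zs0; subst z; rewrite sS in zS.
    apply/negP => /hm1 /orP[/(negP zrest)//|/andP[/(negP zS)]//].
  rewrite negb_or; apply/andP; split; first by apply/eqP=> sz1; subst z1; rewrite sS in z1S.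
  apply/negP => /hm1 /orP[sr|/andP[_]]; last by rewrite !inE eqxx.
  by move: grest => /allP /(_ _ sr) /andP[]; rewrite sS.
- by rewrite /= hl1.
- by rewrite /= hsz1; lia.
- move=> w; rewrite !inE => /orP[/eqP->|/orP[/eqP->|/hm1]]; first by rewrite sS sAv orbT.
    by rewrite eqxx.
  case/orP => [->|/andP[-> ]]; first by rewrite orbT.
  by rewrite !inE negb_or => /andP[_ ->]; rewrite orbT.
Qed.



Lemma good_u (V : finType) (e : rel V) (u : V) g :
  irreflexive e -> good e (nb e u) g u.
Proof. by move=> eirr; rewrite /good inE eirr setDv cards0. Qed.

Lemma S_cycle (V : finType) (e : rel V) (u : V) (s : seq V) :
  symmetric e -> irreflexive e -> s != [::] -> sorted e s -> uniq s -> {subset s <= nb e u} ->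
  has_cycle e (size s).+1.
Proof.
move=> esym eirr; case: s => [//|x p] _ hs hu hS.
exists [:: u, x & p]; split; [done|split].
  rewrite cons_uniq hu andbT; apply/negP => /hS; by rewrite inE eirr.
rewrite /= in hs; rewrite /cycle /= rcons_path hs /=.
have := hS x (mem_head x p); rewrite inE => ->.
by have := hS _ (mem_last x p); rewrite inE esym => ->.
Qed.

Lemma even_cycle (V : finType) (e : rel V) (u : V) g (zs : seq V) :
  symmetric e -> irreflexive e -> all (good e (nb e u) g) zs -> uniq (u :: zs) ->
  1 + size zs + 2 * g < #|nb e u| -> has_cycle e (2 * size zs + 2).
Proof.
move=> esym eirr hg hu hc.
have gu := @good_u V e u g eirr.
have gl : good e (nb e u) g (last u zs).
  have := mem_last u zs; rewrite inE => /orP[/eqP->//|/(allP hg)//].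
have [s0 [s0S s0Av eus0 els0]] := @common_nb V e (nb e u) set0 g u (last u zs) gu gl
   ltac:(rewrite cards0; lia).
have [|||q [hs hq hl hsz hm]] := @chain V e (nb e u) g zs esym u [set s0].
- by rewrite /= gu hg.
- done.
- by rewrite cards1; lia.
exists [:: s0, u & q]; split; [|split].
- by rewrite /= hsz; lia.
- rewrite cons_uniq hq andbT inE negb_or; apply/andP; split.
    by apply/eqP=> h; subst s0; rewrite inE eirr in s0S.
  apply/negP => /hm /orP[sz|/andP[_]]; last by rewrite inE eqxx.
  by move: (allP hg _ sz) => /andP[]; rewrite s0S.
- rewrite /= in hs; rewrite /cycle /= rcons_path hs esym eus0 /= hl. exact: els0.
Qed.

Lemma odd_cycle (V : finType) (e : rel V) (u : V) g (a b y : V) (ws : seq V) :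
  symmetric e -> irreflexive e -> a \in nb e u -> b \in nb e u -> e a b -> e a y ->
  all (good e (nb e u) g) (rcons ws y) -> uniq (u :: rcons ws y) ->
  2 + size (rcons ws y) + 2 * g < #|nb e u| -> has_cycle e (2 * size (rcons ws y) + 3).
Proof.
move=> esym eirr aS bS eab eay hg hu hc.
have gu := @good_u V e u g eirr.
have [|||q [hs hq hl hsz hm]] := @chain V e (nb e u) g (rcons ws y) esym u [set a; b].
- by rewrite /= gu hg.
- done.
- by rewrite cards2; case: (a != b) => /=; lia.
have notin : forall c, c \in [set a; b] -> c \notin u :: q.
  move=> c cab; rewrite inE negb_or; apply/andP; split.
    apply/eqP=> h; subst c; move: cab; rewrite !inE => /orP[/eqP h|/eqP h]; subst u.
      by rewrite inE eirr in aS.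
    by rewrite inE eirr in bS.
  apply/negP => /hm /orP[sz|/andP[_]]; last by rewrite cab.
  have /andP[cS _] := allP hg _ sz.
  by move: cab; rewrite !inE => /orP[/eqP e1|/eqP e1]; subst c; rewrite ?aS ?bS in cS.
exists [:: a, b, u & q]; split; [|split].
- by rewrite /= hsz; lia.
- have na := notin a ltac:(by rewrite !inE eqxx).
  have nb' := notin b ltac:(by rewrite !inE eqxx orbT).
  rewrite 2!cons_uniq hq andbT inE negb_or na nb' !andbT.
  by apply/eqP=> h; subst b; rewrite eirr in eab.
- rewrite /= in hs; rewrite /cycle /= rcons_path hs eab /=.
  rewrite inE esym in bS; rewrite bS /= hl last_rcons esym.
  done.
Qed.



Lemma sum_subset_le (V : finType) (A B : {set V}) (f : V -> nat) :
  A \subset B -> \sum_(v in A) f v <= \sum_(v in B) f v.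
Proof.
move=> AB; rewrite [X in _ <= X](big_setID A) /=.
by rewrite (setIidPr AB) leq_addr.
Qed.

Lemma sum_ge_const (V : finType) (A : {set V}) (f : V -> nat) c :
  (forall v, v \in A -> c <= f v) -> #|A| * c <= \sum_(v in A) f v.
Proof.
move=> h; rewrite -sum_nat_const; apply: leq_sum => v /h //.
Qed.

Lemma n1 (n d t L X M : nat) : 3 <= t -> 320 * t <= n -> d <= n -> L <= 2 * (t - 3) * d ->
  X + M = (n - d) * d -> n * n %/ 4 < L + X -> (2 * n < 5 * d) /\ (5 * d < 3 * n).
Proof.
move=> ht htn hdn hL hX hD.
have h4 : n * n < 4 * (L + X).+1 by rewrite (divn_eq (n*n) 4) in hD *; have := ltn_pmod (n*n) (isT : 0 < 4); nia.
have h5 : n * n < 4 * ((n - d) * d + 2 * t * d).+1 by nia.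
nia.
Qed.

Lemma n2 (n d t g c : nat) : 3 <= t -> 320 * t <= n -> 5 * d < 3 * n -> 10 * g < n -> n < 20 * c.+1 ->
  2 * (t - 3) * d <= (n - d - (1 + g)) * c.+1.
Proof.
move=> ht htn hd hg hc.
set m := n - d - (1 + g).
have hm : 3 * n <= 10 * m + 7 by rewrite /m; lia.
have h1 : 3 * n * n <= 200 * (m * c.+1) + 7 * n by nia.
have h2 : 1600 * (t * d) <= 3 * n * n by nia.
nia.
Qed.

Lemma n5 (n d t g b : nat) : 320 * t <= n -> d <= n -> n <= 10 * g -> g < b ->
  2 * (t - 3) * d <= g * b.
Proof.
move=> htn hd hg hb.
have h1 : n * n <= 100 * (g * b) by nia.
have h2 : 160 * (2 * t * d) <= n * n by nia.
nia.
Qed.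

Lemma n3 (n d t g k : nat) : 3 <= t -> 320 * t <= n -> 2 * n < 5 * d -> 20 * g <= n -> k <= t ->
  2 + k + 2 * g < d.
Proof. lia. Qed.

Lemma n4 (j t : nat) : t = 2 * j + 3 -> 0 < j -> t = 2 * (j - 1).+1 + 3.
Proof. lia. Qed.

Lemma n5' (j : nat) : (j - 1).+1 <= 2 * (j - 1).+1 + 3.
Proof. lia. Qed.

Lemma n6 (t j : nat) : 3 <= t -> false + j.*2 = t -> t = 2 * (j - 1) + 2.
Proof. move=> h1 h2; rewrite -h2 /=; lia. Qed.

Lemma n7 (t n g j : nat) : 320 * t <= n -> n <= 10 * g -> t = 2 * (j - 1) + 2 -> j - 1 <= g.
Proof. lia. Qed.

Lemma n8 (t j : nat) : t = 2 * (j - 1) + 2 -> j - 1 <= t.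
Proof. lia. Qed.

Lemma quarter (n d : nat) : d <= n -> (n - d) * d <= n * n %/ 4.
Proof.
move=> hdn; rewrite leq_divRL //; rewrite -{2 3}(subnK hdn); move: (n - d) => m.
have : 0 <= (m - d) * (m - d) + (d - m) * (d - m) by [].
nia.
Qed.

Lemma comb (V : finType) (e : rel V) (u : V) (t : nat) :
  symmetric e -> irreflexive e -> 3 <= t -> 320 * t <= #|V| ->
  (#|V| * #|V|) %/ 4 < \sum_(w in nb e u) #|nb e w| -> has_cycle e t.
Proof.
move=> esym eirr ht htn hD.
case: (classic (has_cycle e t)) => // nc; exfalso.
set n := #|V| in htn hD.
set S := nb e u in hD.
set d := #|S|.
have uS : u \notin S by rewrite inE eirr.
have nop : forall s, sorted e s -> uniq s -> {subset s <= S} -> size s < t - 1.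
  move=> s hs hu hS; rewrite ltnNge; apply/negP => hsz.
  apply: nc.
  have hc := @S_cycle V e u (take (t-1) s) esym eirr _ (take_sorted _ hs) (take_uniq _ hu).
  rewrite size_takel // in hc.
  have -> : t = (t - 1).+1 by lia.
  apply: hc; last by move=> x /mem_take /hS.
  by rewrite -size_eq0 size_takel //; lia.
have hL : dsum e S <= 2 * (t - 1 - 2) * d := dsum_bound (n:=#|S|) esym eirr (leqnn _) nop.
set T := ~: S.
set X := \sum_(w in S) #|nb e w :&: T|.
set Mis := \sum_(v in T) #|S :\: nb e v|.
have hDe : \sum_(w in S) #|nb e w| = dsum e S + X.
  rewrite /dsum /X -big_split; apply: eq_bigr => w _ /=.
  by rewrite -card_nbI_sum /T -setDE cardsID.
have hXM : X + Mis = #|T| * d.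
  have -> : X = \sum_(v in T) #|nb e v :&: S|.
    rewrite /X (eq_bigr (fun w => \sum_(v in T) (e w v : nat))); last by move=> w _; rewrite card_nbI_sum.
    rewrite exchange_big /=; apply: eq_bigr => v _; rewrite card_nbI_sum.
    by apply: eq_bigr => w _; rewrite esym.
  rewrite /Mis -big_split -sum_nat_const; apply: eq_bigr => v _ /=.
  by rewrite setIC cardsID.
have hT : #|T| = n - d by rewrite /T cardsCs setCK.
have hdn : d <= n by rewrite /d /n max_card.
have [hd1 hd2] : (2 * n < 5 * d) /\ (5 * d < 3 * n).
  apply: (@n1 n d t (dsum e S) X Mis) => //.
    by move: hL; have -> : t - 1 - 2 = t - 3 by lia.
  by rewrite hXM hT.
  by rewrite -hDe.
suff hLM : dsum e S <= Mis.
  have := quarter hdn.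
  move: hD; rewrite hDe.
  have := hXM; rewrite hT; lia.
have TS : forall v, (v \in T) = (v \notin S) by move=> v; rewrite inE.
set γ := n %/ 20.
have hγ1 : 20 * γ <= n by rewrite /γ; have := divn_eq n 20; lia.
have hγ2 : n < 20 * γ.+1 by rewrite /γ; have := ltn_pmod n (isT: 0 < 20); have := divn_eq n 20; lia.
set Gd := [set z | good e S γ z && (z != u)].
set g := #|Gd|.
have GdT : Gd \subset T.
  by apply/subsetP => z; rewrite !inE /good => /andP[/andP[h _] _]; rewrite inE in h.
case: (ltnP (10 * g) n) => hg.
  set Bad := T :\: (u |: Gd).
  have hBad : forall v, v \in Bad -> γ.+1 <= #|S :\: nb e v|.
    move=> v; rewrite in_setD in_setU1 negb_or TS => /andP[/andP[vu vG] vS].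
    move: vG; rewrite in_set /good vS vu /= andbT; lia.
  have h1 : #|Bad| * γ.+1 <= Mis.
    apply: leq_trans (sum_ge_const hBad) _; apply: sum_subset_le.
    by rewrite /Bad subsetDl.
  have h2 : n - d - (1 + g) <= #|Bad|.
    have := cardD_ge T (u |: Gd); have := cardsU1 u Gd; rewrite hT -/g /Bad; lia.
  have := n2 ht htn hd2 hg hγ2.
  move: hL; have -> : t - 1 - 2 = t - 3 by lia.
  move=> hL h3; apply: leq_trans hL _; apply: leq_trans h3 _.
  by apply: leq_trans h1; rewrite leq_mul2r h2 orbT.
have goodG : forall z, z \in Gd -> good e S γ z by move=> z; rewrite inE => /andP[].
have Gdu : u \notin Gd by rewrite inE eqxx andbF.
case ot: (odd t).
  set j := (t - 3)./2.
  have hj : t = 2 * j + 3.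
    have := odd_double_half (t - 3); rewrite oddB // ot /=; rewrite -/j; lia.
  set B := [set s in S | [forall z in Gd, ~~ e s z]].
  have hB : forall a b, a \in S -> b \in S -> e a b -> a \in B.
    move=> a b aS bS eab; rewrite in_set aS /=.
    apply/negPn/negP => /forallPn [y]; rewrite negb_imply negbK => /andP[yG eay].
    apply: nc.
    case j0: (j == 0).
      exists [:: a; b; u]; split; [by rewrite hj (eqP j0)|split].
        have ab : a != b by apply/eqP=> h; subst b; rewrite eirr in eab.
        have au : a != u by apply/eqP=> h; subst u; rewrite inE eirr in aS.
        have bu : b != u by apply/eqP=> h; subst u; rewrite inE eirr in bS.
        by rewrite /= !inE !negb_or ab au bu.
      have eua : e u a by move: aS; rewrite /S /nb inE.
      have eub : e u b by move: bS; rewrite /S /nb inE.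
      by rewrite /cycle /= eab (esym b) eub eua.
    set ws := take (j - 1) (enum (Gd :\ y)).
    have hsz : size ws = j - 1.
      rewrite size_takel // -cardE; have := cardsD1 y Gd; rewrite yG /=; lia.
    have wsG : forall z, z \in ws -> z \in Gd :\ y by move=> z /mem_take; rewrite mem_enum.
    have hall : all (good e S γ) (rcons ws y).
      rewrite all_rcons goodG //=; apply/allP => z /wsG; rewrite in_setD1 => /andP[_ /goodG //].
    have huz : uniq (u :: rcons ws y).
      rewrite cons_uniq rcons_uniq mem_rcons in_cons negb_or.
      apply/and3P; split.
      - apply/andP; split; first by apply/eqP=> h; subst u; rewrite yG in Gdu.
        by apply/negP=> /wsG; rewrite in_setD1 => /andP[_]; rewrite (negPf Gdu).
      - by apply/negP=> /wsG; rewrite in_setD1 eqxx.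
      - by rewrite take_uniq // enum_uniq.
    have := @odd_cycle V e u γ a b y ws esym eirr aS bS eab eay hall huz.
    have jpos : 0 < j by rewrite lt0n j0.
    rewrite size_rcons hsz (n4 hj jpos).
    by apply; apply: (n3 ht htn hd1 hγ1); rewrite (n4 hj jpos) n5' .
  have BS : B \subset S by apply/subsetP => z; rewrite in_set => /andP[].
  have hL2 : dsum e S <= #|B| * #|B|.
    have h : forall w, w \in S -> \sum_(v in S) (e w v : nat) <= (if w \in B then #|B| else 0).
      move=> w wS; rewrite -card_nbI_sum; case: ifP => wB.
        apply: subset_leq_card; apply/subsetP => x; rewrite in_setI => /andP[].
        rewrite {1}/nb in_set => ewx xS; apply: (hB x w xS wS); by rewrite esym.
      rewrite leqn0 cards_eq0; apply/eqP/setP => x; rewrite in_set0 in_setI.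
      apply/negP => /andP[]; rewrite {1}/nb in_set => ewx xS.
      by rewrite (hB w x wS xS ewx) in wB.
    rewrite /dsum; apply: (@leq_trans (\sum_(w in S) (if w \in B then #|B| else 0))); first by apply: leq_sum.
    rewrite (big_setID B) /= (setIidPr BS) [X in _ + X]big1 ?addn0; last first.
      by move=> w; rewrite in_setD => /andP[/negPf ->].
    rewrite (eq_bigr (fun _ => #|B|)); last by move=> w ->.
    by rewrite sum_nat_const.
  have hM2 : g * #|B| <= Mis.
    apply: leq_trans (sum_subset_le (fun v => #|S :\: nb e v|) GdT).
    apply: sum_ge_const => v vG; apply: subset_leq_card; apply/subsetP => b bB.
    rewrite in_setD (subsetP BS _ bB) andbT /nb in_set.
    move: bB; rewrite in_set => /andP[_ /forallP /(_ v)]; rewrite vG /= esym //.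
  case: (leqP #|B| g) => hBg.
    apply: leq_trans hL2 (leq_trans _ hM2); by rewrite leq_mul2r hBg orbT.
  apply: leq_trans hM2; move: hL; rewrite (_ : t - 1 - 2 = t - 3); last by lia.
  move=> hL; apply: leq_trans hL _; exact: (n5 htn hdn hg hBg).
set j := t./2.
have hj : t = 2 * (j - 1) + 2.
  have := odd_double_half t; rewrite ot /= -/j => h; apply: n6 ht h.
set zs := take (j - 1) (enum Gd).
have hsz : size zs = j - 1.
  by rewrite size_takel // -cardE -/g; apply: n7 htn hg hj.
have hall : all (good e S γ) zs by apply/allP => z /mem_take; rewrite mem_enum => /goodG.
have huz : uniq (u :: zs).
  rewrite cons_uniq take_uniq ?enum_uniq // andbT.
  by apply/negP => /mem_take; rewrite mem_enum (negPf Gdu).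
exfalso; apply: nc; have := @even_cycle V e u γ zs esym eirr hall huz.
rewrite hsz -hj; apply; apply: leq_trans (n3 ht htn hd1 hγ1 (n8 hj)); lia.
Qed.

Import Order.TTheory GRing.Theory Num.Theory.
Open Scope ring_scope.

Lemma spec_bound (R : realType) (N : nat) (e : rel 'I_N) (mu : R) (v : 'rV[R]_N) :
  symmetric e -> 0 <= mu -> v *m (\matrix_(i, j) (e i j)%:R) = mu *: v -> v != 0 ->
  exists u, mu ^+ 2 <= (\sum_(i in nb e u) #|nb e i|)%N%:R.
Proof.
move=> esym mu0 hv vn0.
set x := fun i => `|v 0 i|.
have x0 : forall i, 0 <= x i by move=> i; rewrite /x normr_ge0.
have H1 : forall j, mu * x j <= \sum_i x i * (e i j)%:R.
  move=> j; rewrite /x -[mu]ger0_norm // -normrM.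
  have hj := congr1 (fun M : 'M[R]_(1,N) => M 0 j) hv; rewrite /= !mxE in hj.
  rewrite -hj; apply: le_trans (ler_norm_sum _ _ _) _.
  by apply: ler_sum => k _; rewrite !mxE normrM normr_nat.
have [i1 hi1] : exists i, v 0 i != 0.
  case: (pickP (fun i => v 0 i != 0)) => [i hi|h]; first by exists i.
  move/eqP: vn0; case; apply/rowP => i; rewrite mxE; move: (h i) => /= /negbFE /eqP //.
have [u _ hu] := @Order.TotalTheory.arg_maxP _ R 'I_N i1 predT x isT.
exists u.
have xu : 0 < x u.
  apply: lt_le_trans (hu i1 isT); by rewrite /x normr_gt0.
set a := fun i j => (e i j)%:R : R.
have a0 : forall i j, 0 <= a i j by move=> i j; rewrite /a ler0n.
have hdeg : forall i, \sum_k a k i = #|nb e i|%:R.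
  move=> i; rewrite -(setIT (nb e i)) card_nbI_sum natr_sum.
  by apply: eq_big => [k|k _]; rewrite ?inE // /a esym.
have hD : \sum_i a i u * \sum_k a k i = (\sum_(i in nb e u) #|nb e i|)%N%:R.
  rewrite natr_sum [RHS]big_mkcond /=; apply: eq_bigr => i _.
  rewrite hdeg inE /a esym; case: (e u i); by rewrite ?mul1r ?mul0r.
have step : mu ^+ 2 * x u <= x u * (\sum_(i in nb e u) #|nb e i|)%N%:R.
  rewrite -hD expr2 -mulrA.
  apply: le_trans (ler_wpM2l mu0 (H1 u)) _.
  rewrite mulr_sumr.
  have h2 : \sum_i mu * (x i * a i u) <= \sum_i a i u * \sum_k x k * a k i.
    apply: ler_sum => i _; rewrite (_ : mu * (x i * a i u) = a i u * (mu * x i)); last by ring.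
    apply: ler_wpM2l; first exact: a0.
    exact: H1.
  apply: le_trans h2 _.
  rewrite mulr_sumr; apply: ler_sum => i _; rewrite mulrCA; apply: ler_wpM2l; first exact: a0.
  rewrite mulr_sumr; apply: ler_sum => k _; apply: ler_wpM2r; first exact: a0.
  exact: hu.
by rewrite mulrC ler_pM2l in step.
Qed.

Close Scope ring_scope.
Unset Implicit Arguments.

Theorem theorem1 :
  exists n0 : nat, forall (R : realType) (n : nat), (n0 <= n)%N ->
  forall (T : finType) (e : rel T), simple_graph e -> #|T| = n ->
  forall mu : R, largest_eigenvalue (adjmx R e) mu ->
  (Num.sqrt (((n * n) %/ 4)%N%:R : R) < mu)%R ->
  forall t : nat, (3 <= t)%N -> (320 * t <= n)%N -> has_cycle e t.
Proof.
exists 0%N => R n _ T e [esym eirr] hn mu [hev _] hmu t ht htn.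
pose e' : rel 'I_#|T| := fun i j => e (enum_val i) (enum_val j).
have e'sym : symmetric e' by move=> i j; rewrite /e' esym.
have e'irr : irreflexive e' by move=> i; rewrite /e' eirr.
have [v hv vn0] := eigenvalueP hev.
have mu0 : (0 <= mu)%R by apply: le_trans (sqrtr_ge0 _) (ltW hmu).
have [u hu] := @spec_bound R #|T| e' mu v e'sym mu0 hv vn0.
have hq := @sqr_sqrtr R ((n * n) %/ 4)%N%:R (ler0n _ _).
have hs0 := sqrtr_ge0 (((n * n) %/ 4)%N%:R : R).
have hlt : (((n * n) %/ 4)%N%:R < (\sum_(i in nb e' u) #|nb e' i|)%N%:R :> R)%R.
  apply: lt_le_trans hu; rewrite -hq; nra.
rewrite ltr_nat in hlt.
have hN : #|'I_#|T| | = n by rewrite card_ord.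
rewrite -hN in htn hlt.
have := @comb _ e' u t e'sym e'irr ht htn hlt.
case=> s [hsz [hus hcs]].
exists (map enum_val s); split; first by rewrite size_map.
split; first by rewrite (map_inj_uniq enum_val_inj).
by rewrite cycle_map.
Qed.
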